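(* For all integers $v\geq 1$ and $r\geq 1$, $$\sum_{i=1}^{2v-1}2^{i-1}\binom{2r+i-1}{i}\sigma(2v+1-i,2r+i)+2^{2v}\sum_{j=0}^{2r-2}(-1)^j\binom{2v+j}{j}\lambda(2v+1+j)\lambda(2r-j)$$ $$-2^{2v}\binom{2v+2r-1}{2v}(v+r)\lambda(2v+2r+1)+2^{2v}\binom{2v+2r-1}{2v}\sum_{j=1}^{r+v-1}\lambda(2j)\lambda(2r+2v-2j+1)=0.$$
   Context: For integers $t\geq 1$, $n\geq 1$ let $S_n^{(t)}=\sum_{k=1}^{n}\frac{1}{(2k-1)^t}$, and for integers $s\geq 2$, $t\geq 1$ let $\sigma(s,t)=\sum_{n\geq 1}\frac{S_n^{(t)}}{n^s}$. For real $s>1$, $\lambda(s)=\sum_{n\geq 1}\frac{1}{(2n-1)^s}$. *)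

(* Defs.v *)
From Stdlib Require Import Reals.
From Coquelicot Require Import Coquelicot.
Open Scope R_scope.

Definition binom (n k : nat) : R := Stdlib.Reals.Binomial.C n k.

Definition Sodd (n t : nat) : R :=
  sum_n_m (fun k : nat => / (INR (2 * k - 1)) ^ t) 1 n.

(* sigma(s,t) = sum_{n>=1} S_n^{(t)} / n^s (0-indexed: n := S n) *)
Definition sigma_st (s t : nat) : R :=
  Series (fun n : nat => Sodd (S n) t / (INR (S n)) ^ s).

(* lambda(s) = sum_{n>=1} 1/(2n-1)^s, written 0-indexed as sum_{n>=0} 1/(2n+1)^s *)
Definition lambda_odd (s : nat) : R :=
  Series (fun n : nat => / (INR (2 * n + 1)) ^ s).

(* Main.v *)
Require Import Defs.
From Stdlib Require Import Reals.
From Coquelicot Require Import Coquelicot.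
From Stdlib Require Import Lra Lia Arith.
Open Scope R_scope.

Lemma plusR (x y : R) : plus x y = x + y.
Proof. reflexivity. Qed.

Ltac Req := match goal with |- ?a = ?b => change (@eq R a b) end.

Ltac gens := repeat match goal with |- context[@sum_n_m R_AbelianMonoid ?f ?a ?b] =>
  let x := fresh "x" in generalize (@sum_n_m R_AbelianMonoid f a b : R); intro x end.
Ltac Rring := try Req; gens; ring.

Lemma sE (a : nat -> R) n m : (m < n)%nat -> sum_n_m a n m = 0.
Proof. intros; rewrite sum_n_m_zero; auto. Qed.

Lemma sS (a : nat -> R) n m : (n <= S m)%nat -> sum_n_m a n (S m) = sum_n_m a n m + a (S m).
Proof. intros; rewrite sum_n_Sm; auto. Qed.

Lemma s0 (a : nat -> R) n : sum_n_m a n n = a n.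
Proof. apply sum_n_n. Qed.

Lemma geom_aux t : forall Q, t^(S Q) + (1 - t) * sum_n_m (fun j => t^j) 0 Q = 1.
Proof.
  induction Q.
  - rewrite s0. simpl. ring.
  - rewrite sS by lia. replace (t ^ S (S Q)) with (t * t^(S Q)) by (simpl; ring).
    replace (t^(S Q)) with (t * t^Q) in IHQ |- * by (simpl; ring). nra.
Qed.

Lemma pf_inner P t : forall Q,
  sum_n_m (fun j => Binomial.C (P+1+j) j * t^j) 0 Q * (1-t)
  - sum_n_m (fun j => Binomial.C (P+j) j * t^j) 0 Q = - Binomial.C (P+1+Q) Q * t^(S Q).
Proof.
  induction Q.
  - rewrite !s0. rewrite !C_n_0. simpl. ring.
  - rewrite !sS by lia.
    assert (H1 : Binomial.C (P + S Q) (S Q) = Binomial.C (P+1+Q) (S Q)) by (f_equal; lia).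
    assert (H2 : Binomial.C (P + 1 + S Q) (S Q) = Binomial.C (S (P+1+Q)) (S Q)) by (f_equal; lia).
    rewrite H1, H2. rewrite <- pascal by lia.
    replace (t ^ S (S Q)) with (t * t^(S Q)) by (simpl; ring).
    replace (t^(S Q)) with (t * t^Q) in IHQ |- * by (simpl; ring).
    nra.
Qed.

Lemma pf_poly Q u t : u + t = 1 -> forall P,
  t^(S Q) * sum_n_m (fun i => Binomial.C (Q+i) i * u^i) 0 P
  + u^(S P) * sum_n_m (fun j => Binomial.C (P+j) j * t^j) 0 Q = 1.
Proof.
  intros Hut. induction P.
  - rewrite s0. rewrite C_n_0.
    rewrite (sum_n_m_ext _ (fun j => t^j)).
    2:{ intros; simpl; rewrite C_n_n; ring. }
    replace u with (1 - t) by lra. pose proof (geom_aux t Q) as G. rewrite pow_O, pow_1. lra.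
  - rewrite sS by lia. 
    pose proof (pf_inner P t Q) as HI.
    assert (HC : Binomial.C (Q + S P) (S P) = Binomial.C (P+1+Q) Q).
    { rewrite pascal_step1 by lia. f_equal; lia. }
    rewrite HC.
    rewrite (sum_n_m_ext (fun j => Binomial.C (S P + j) j * t ^ j) (fun j => Binomial.C (P+1 + j) j * t ^ j)).
    2:{ intros; f_equal; f_equal; lia. }
    replace u with (1 - t) in * by lra.
    replace ((1-t)^(S (S P))) with ((1-t)^(S P) * (1-t)) by (simpl; ring).
    replace (t ^ S Q) with (t^(S Q)) by reflexivity.
    set (A := sum_n_m (fun j => Binomial.C (P + 1 + j) j * t ^ j) 0 Q) in *.
    set (B := sum_n_m (fun j => Binomial.C (P + j) j * t ^ j) 0 Q) in *.
    assert (A * (1-t) = B - Binomial.C (P + 1 + Q) Q * t ^ S Q) by lra.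
    set (S0 := sum_n_m (fun i : nat => Binomial.C (Q + i) i * (1 - t) ^ i) 0 P) in *.
    set (U := (1-t)^(S P)) in *. set (T := t^(S Q)) in *. set (Cc := Binomial.C (P + 1 + Q) Q) in *.
    replace (T * (S0 + Cc * U) + U * (1 - t) * A) with ((T * S0 + U * B) + U * (A * (1-t) - B + Cc * T)) by ring.
    rewrite IHP, H. ring.
Qed.

Lemma pow_split (X : R) k n : (k <= n)%nat -> X^n = X^k * X^(n-k).
Proof. intros; rewrite <- pow_add; f_equal; lia. Qed.

Lemma pf_term (X s : R) P Q i : X <> 0 -> s <> 0 -> (i <= P)%nat ->
  / (X^(S P - i) * s^(S Q + i)) = / s^(S P + S Q) * ((X/s)^i / (X/s)^(S P)).
Proof.
  intros HX Hs Hi.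
  unfold Rdiv. rewrite !Rpow_mult_distr, !pow_inv.
  rewrite (pow_split X i (S P)) by lia.
  rewrite (pow_split s i (S P)) by lia.
  rewrite !pow_add.
  assert (X^i <> 0) by (apply pow_nonzero; auto).
  assert (X^(S P - i) <> 0) by (apply pow_nonzero; auto).
  assert (s^i <> 0) by (apply pow_nonzero; auto).
  assert (s^(S P - i) <> 0) by (apply pow_nonzero; auto).
  assert (s^(S Q) <> 0) by (apply pow_nonzero; auto).
  rewrite (pow_split s i (S P)) by lia. field. auto.
Qed.

Lemma sext (a b : nat -> R) n m : (forall k, (n <= k <= m)%nat -> a k = b k) -> sum_n_m a n m = sum_n_m b n m.
Proof. intros H; apply sum_n_m_ext_loc; exact H. Qed.

Lemma sum_scal_l (c : R) (a : nat -> R) n m : sum_n_m (fun k => c * a k) n m = c * sum_n_m a n m.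
Proof. apply (sum_n_m_mult_l c a n m). Qed.

Lemma sum_plus (a b : nat -> R) n m : sum_n_m (fun k => a k + b k) n m = sum_n_m a n m + sum_n_m b n m.
Proof. apply (sum_n_m_plus a b n m). Qed.

Lemma pf_frac (X Y : R) P Q : X <> 0 -> Y <> 0 -> X + Y <> 0 ->
  / (X^(S P) * Y^(S Q)) =
  sum_n_m (fun i => Binomial.C (Q+i) i * / (X^(S P - i) * (X+Y)^(S Q + i))) 0 P
  + sum_n_m (fun j => Binomial.C (P+j) j * / (Y^(S Q - j) * (X+Y)^(S P + j))) 0 Q.
Proof.
  intros HX HY Hs.
  set (s := X + Y) in *.
  rewrite (sext _ (fun i => / s^(S P + S Q) * (/ (X/s)^(S P) * (Binomial.C (Q+i) i * (X/s)^i)))).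
  2:{ intros k Hk. rewrite pf_term by (auto; lia). unfold Rdiv; ring. }
  rewrite (sext (fun j => Binomial.C (P+j) j * / (Y^(S Q - j) * s^(S P + j))) (fun j => / s^(S P + S Q) * (/ (Y/s)^(S Q) * (Binomial.C (P+j) j * (Y/s)^j)))).
  2:{ intros k Hk. rewrite pf_term by (auto; lia). replace (S Q + S P)%nat with (S P + S Q)%nat by lia. unfold Rdiv; ring. }
  rewrite !sum_scal_l.
  assert (Hut : X/s + Y/s = 1) by (unfold s in *; field; auto).
  pose proof (pf_poly Q (X/s) (Y/s) Hut P) as H.
  set (A := sum_n_m (fun i => Binomial.C (Q + i) i * (X / s) ^ i) 0 P) in *.
  set (B := sum_n_m (fun j => Binomial.C (P + j) j * (Y / s) ^ j) 0 Q) in *.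
  assert (Hu : (X/s)^(S P) <> 0) by (apply pow_nonzero; unfold Rdiv; apply Rmult_integral_contrapositive; split; auto; apply Rinv_neq_0_compat; auto).
  assert (Ht : (Y/s)^(S Q) <> 0) by (apply pow_nonzero; unfold Rdiv; apply Rmult_integral_contrapositive; split; auto; apply Rinv_neq_0_compat; auto).
  assert (E : / (X/s)^(S P) * A + / (Y/s)^(S Q) * B = / ((X/s)^(S P) * (Y/s)^(S Q))).
  { transitivity (((Y/s)^(S Q) * A + (X/s)^(S P) * B) * / ((X/s)^(S P) * (Y/s)^(S Q))).
    field. auto. rewrite H. ring. }
  rewrite <- Rmult_plus_distr_l, E.
  unfold Rdiv. rewrite !Rpow_mult_distr, !pow_inv, pow_add.
  assert (X^(S P) <> 0) by (apply pow_nonzero; auto).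
  assert (Y^(S Q) <> 0) by (apply pow_nonzero; auto).
  assert (s^(S P) <> 0) by (apply pow_nonzero; auto).
  assert (s^(S Q) <> 0) by (apply pow_nonzero; auto).
  field. auto.
Qed.

Lemma is_series_lim (a : nat -> R) l : is_series a l <-> is_lim_seq (fun n => sum_n_m a 0 n) l.
Proof. split; intro H; exact H. Qed.

Lemma is_series_Un (a : nat -> R) l : is_series a l -> Un_cv (fun n => sum_n_m a 0 n) l.
Proof. intro H. apply is_lim_seq_Reals. exact H. Qed.

Lemma Un_is_series (a : nat -> R) l : Un_cv (fun n => sum_n_m a 0 n) l -> is_series a l.
Proof. intro H. apply is_lim_seq_Reals in H. exact H. Qed.

Lemma s_nonneg (a : nat -> R) n m : (forall k, 0 <= a k) -> 0 <= sum_n_m a n m.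
Proof.
  intros H. destruct (le_lt_dec n m) as [Hl|Hl].
  - induction Hl. rewrite s0; auto. rewrite sS by lia. specialize (H (S m)). lra.
  - rewrite sum_n_m_zero by lia. apply Rle_refl.
Qed.

Lemma s_mono (a : nat -> R) n m : (forall k, 0 <= a k) -> (n <= m)%nat -> sum_n_m a 0 n <= sum_n_m a 0 m.
Proof.
  intros H Hl. induction Hl. lra. rewrite sS by lia. specialize (H (S m)). lra.
Qed.

Lemma s_le (a b : nat -> R) n m : (forall k, (n <= k <= m)%nat -> a k <= b k) -> sum_n_m a n m <= sum_n_m b n m.
Proof.
  intros H. destruct (le_lt_dec n m) as [Hl|Hl].
  - induction Hl. rewrite !s0; apply H; lia. rewrite !sS by lia.
    assert (a (S m) <= b (S m)) by (apply H; lia).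
    assert (sum_n_m a n m <= sum_n_m b n m) by (apply IHHl; intros; apply H; lia). lra.
  - rewrite !sum_n_m_zero by lia. apply Rle_refl.
Qed.

Lemma series_partial_le (a : nat -> R) l n : (forall k, 0 <= a k) -> is_series a l -> sum_n_m a 0 n <= l.
Proof.
  intros H Hs. apply is_series_Un in Hs.
  apply (growing_ineq (fun n => sum_n_m a 0 n)); auto.
  intro k. rewrite sS by lia. specialize (H (S k)). lra.
Qed.

Lemma series_nonneg (a : nat -> R) l : (forall k, 0 <= a k) -> is_series a l -> 0 <= l.
Proof.
  intros H Hs. pose proof (series_partial_le a l 0 H Hs). rewrite s0 in H0. specialize (H 0%nat). lra.
Qed.

Definition diag (f : nat -> nat -> R) (n : nat) : R := sum_n_m (fun a => f a (n - a)%nat) 0 n.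
Definition tri (f : nat -> nat -> R) (M : nat) : R := sum_n_m (fun a => sum_n_m (f a) 0 (M - a)) 0 M.

Lemma tri_diag f M : sum_n_m (diag f) 0 M = tri f M.
Proof.
  induction M.
  - rewrite s0. unfold diag, tri. rewrite !s0. reflexivity.
  - rewrite sS by lia. rewrite IHM. unfold tri, diag.
    rewrite (sS (fun a => sum_n_m (f a) 0 (S M - a)) 0 M) by lia.
    rewrite (sS (fun a => f a (S M - a)%nat) 0 M) by lia.
    replace (S M - S M)%nat with 0%nat by lia. rewrite s0.
    rewrite (sext (fun a => sum_n_m (f a) 0 (S M - a)) (fun a => sum_n_m (f a) 0 (M - a) + f a (S M - a)%nat)).
    2:{ intros k Hk. replace (S M - k)%nat with (S (M - k)) by lia. rewrite sS by lia. reflexivity. }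
    rewrite sum_plus. Req. ring.
Qed.

Lemma finite_choice (P : nat -> nat -> Prop) :
  (forall a, exists B, forall B', (B <= B')%nat -> P a B') ->
  forall A, exists B, forall a B', (a <= A)%nat -> (B <= B')%nat -> P a B'.
Proof.
  intros H A. induction A.
  - destruct (H 0%nat) as [B HB]. exists B. intros a B' Ha HB'. replace a with 0%nat by lia. auto.
  - destruct IHA as [B1 HB1]. destruct (H (S A)) as [B2 HB2]. exists (Nat.max B1 B2).
    intros a B' Ha HB'. destruct (Nat.eq_dec a (S A)). subst. apply HB2; lia. apply HB1; lia.
Qed.

Lemma L1 (f : nat -> nat -> R) (r : nat -> R) (Sm : R) :
  (forall a b, 0 <= f a b) -> (forall a, is_series (f a) (r a)) -> is_series r Sm ->
  is_series (diag f) Sm.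
Proof.
  intros Hf Hr HS.
  assert (Hr0 : forall a, 0 <= r a) by (intro a; apply (series_nonneg (f a)); auto).
  apply Un_is_series.
  intros eps Heps.
  pose proof HS as HS'. apply is_series_Un in HS'.
  destruct (HS' (eps/2)) as [A HA]. lra.
  assert (Hrow : forall a, exists B, forall B', (B <= B')%nat ->
            r a - eps / (2 * INR (S A)) < sum_n_m (f a) 0 B').
  { intro a. pose proof (Hr a) as Ha. apply is_series_Un in Ha.
    destruct (Ha (eps / (2 * INR (S A)))) as [B HB].
    { apply Rdiv_lt_0_compat; auto. pose proof (lt_0_INR (S A) (Nat.lt_0_succ A)). lra. }
    exists B. intros B' HB'. specialize (HB B' HB'). unfold Rdist in HB. 
    apply Rabs_def2 in HB. destruct HB. lra. }
  destruct (finite_choice _ Hrow A) as [B HB].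
  exists (A + B)%nat. intros M HM.
  rewrite tri_diag. unfold Rdist.
  assert (Hup : tri f M <= Sm).
  { unfold tri. apply Rle_trans with (sum_n_m r 0 M).
    - apply s_le. intros a Ha. apply Rle_trans with (sum_n_m (f a) 0 (M - a)). lra.
      apply series_partial_le; auto.
    - apply series_partial_le; auto. }
  assert (Hlow : Sm - eps < tri f M).
  { specialize (HA A (le_n A)). unfold Rdist in HA. apply Rabs_def2 in HA. destruct HA as [HA1 HA2].
    assert (H1 : sum_n_m (fun a => sum_n_m (f a) 0 (M - a)) 0 A <= tri f M).
    { unfold tri. apply s_mono. intro; apply s_nonneg; auto. lia. }
    assert (H2 : sum_n_m (fun a => r a - eps / (2 * INR (S A))) 0 A <= sum_n_m (fun a => sum_n_m (f a) 0 (M - a)) 0 A).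
    { apply s_le. intros a Ha. left. apply HB; lia. }
    rewrite (sext _ (fun a => r a + (- (eps / (2 * INR (S A)))))) in H2 by (intros; ring).
    rewrite sum_plus, sum_n_m_const in H2.
    replace (S A - 0)%nat with (S A) in H2 by lia.
    assert (INR (S A) * - (eps / (2 * INR (S A))) = - (eps/2)).
    { field. pose proof (lt_0_INR (S A) (Nat.lt_0_succ A)). lra. }
    lra. }
  apply Rabs_def1; lra.
Qed.

Lemma inv_lim : is_lim_seq (fun n => / INR (S n)) 0.
Proof.
  assert (H : is_lim_seq (fun n => INR (S n)) p_infty).
  { apply (is_lim_seq_incr_1 INR p_infty). exact is_lim_seq_INR. }
  pose proof (is_lim_seq_inv _ _ H) as H2. simpl in H2. apply H2. discriminate.
Qed.

Lemma INR_S_pos n : 0 < INR (S n).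
Proof. apply lt_0_INR; lia. Qed.

Lemma tele_sq : is_series (fun n => / INR (S n) - / INR (S (S n))) 1.
Proof.
  apply is_series_lim.
  apply (is_lim_seq_ext (fun n => 1 - / INR (S (S n)))).
  { intro n. induction n.
    - rewrite s0. change (INR 1) with 1. field. change (INR 2) with (1+1). lra.
    - rewrite sS by lia. rewrite <- IHn. ring. }
  replace 1 with (1 - 0) at 1 by ring.
  apply is_lim_seq_minus'. apply is_lim_seq_const.
  apply (is_lim_seq_incr_1 (fun n => / INR (S n)) 0). exact inv_lim.
Qed.

Lemma ex_cmp (a b : nat -> R) : (forall n, 0 <= a n <= b n) -> ex_series b -> ex_series a.
Proof.
  intros H Hb. apply (ex_series_le a b); auto.
  intro n. rewrite Rabs_pos_eq; apply H.
Qed.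

Lemma ex_scal (c : R) (a : nat -> R) : ex_series a -> ex_series (fun n => c * a n).
Proof. intro H. apply (ex_series_ext (fun n => a n * c)). intro; Req; ring. apply ex_series_scal_r; auto. Qed.

Lemma inv_sq_ex : ex_series (fun n => / INR (S n) ^ 2).
Proof.
  apply (ex_cmp _ (fun n => 2 * (/ INR (S n) - / INR (S (S n))))).
  - intro n. pose proof (pos_INR n) as Hn. rewrite (S_INR (S n)). rewrite S_INR.
    set (x := INR n + 1). assert (1 <= x) by (unfold x; lra). split.
    + left. apply Rinv_0_lt_compat. apply pow_lt. lra.
    + replace (2 * (/ x - / (x + 1))) with (/ (x * (x+1) / 2)) by (field; lra).
      apply Rinv_le_contravar. 
      * apply Rdiv_lt_0_compat; nra.
      * simpl. nra.
  - apply ex_scal. exists 1. apply tele_sq.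
Qed.

Lemma ex_cmp_sq (a : nat -> R) (C : R) : (forall n, 0 <= a n <= C * / INR (S n) ^ 2) -> ex_series a.
Proof.
  intros H. apply (ex_cmp _ (fun n => C * / INR (S n) ^ 2)); auto.
  apply ex_scal. apply inv_sq_ex.
Qed.

Lemma s_shift1 (f : nat -> R) n m : sum_n_m (fun k => f (S k)) n m = sum_n_m f (S n) (S m).
Proof. apply (sum_n_m_S f n m). Qed.

Lemma s_shift c : forall (f : nat -> R) n m, sum_n_m (fun k => f (k + c)%nat) n m = sum_n_m f (n + c) (m + c).
Proof.
  induction c; intros f n m.
  - replace (n+0)%nat with n by lia. replace (m+0)%nat with m by lia. apply sext. intros; f_equal; lia.
  - rewrite (sext _ (fun k => (fun j => f (S j)) (k + c)%nat)) by (intros; f_equal; lia).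
    rewrite (IHc (fun j => f (S j))). rewrite s_shift1. f_equal; lia.
Qed.

Lemma s_rev (f : nat -> R) n : sum_n_m f 0 n = sum_n_m (fun i => f (n - i)%nat) 0 n.
Proof.
  induction n.
  - rewrite !s0. reflexivity.
  - rewrite sS by lia. rewrite (sum_Sn_m (fun i => f (S n - i)%nat) 0 (S n)) by lia. replace (S n - 0)%nat with (S n) by lia.
    rewrite <- (s_shift1 (fun i => f (S n - i)%nat) 0 n).
    rewrite (sext (fun k => f (S n - S k)%nat) (fun i => f (n - i)%nat)) by (intros; f_equal; lia).
    rewrite IHn. change (plus (f (S n)) ?x) with (f (S n) + x). Rring.
Qed.

Lemma s_zero (f : nat -> R) n m : (forall k, (n <= k <= m)%nat -> f k = 0) -> sum_n_m f n m = 0.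
Proof.
  intros H. rewrite (sext f (fun _ => 0)) by auto. rewrite sum_n_m_const. Rring.
Qed.

Lemma s_switch (F : nat -> nat -> R) n p q :
  sum_n_m (fun i => sum_n_m (fun a => F i a) 0 n) p q = sum_n_m (fun a => sum_n_m (fun i => F i a) p q) 0 n.
Proof.
  induction q.
  - destruct p.
    + rewrite s0. apply sext. intros; rewrite s0; auto.
    + rewrite sum_n_m_zero by lia. rewrite s_zero. reflexivity. intros; rewrite sum_n_m_zero by lia; reflexivity.
  - destruct (le_lt_dec p (S q)).
    + rewrite sS by lia. rewrite IHq.
      rewrite (sext (fun a => sum_n_m (fun i => F i a) p (S q)) (fun a => sum_n_m (fun i => F i a) p q + F (S q) a)).
      2:{ intros; rewrite sS by lia; reflexivity. }
      rewrite sum_plus. reflexivity.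
    + rewrite sum_n_m_zero by lia. rewrite s_zero. reflexivity. intros; rewrite sum_n_m_zero by lia; reflexivity.
Qed.

Lemma s_Chasles (f : nat -> R) n m k : (n <= S m)%nat -> (m <= k)%nat ->
  sum_n_m f n k = sum_n_m f n m + sum_n_m f (S m) k.
Proof. intros; rewrite (sum_n_m_Chasles f n m k); auto. Qed.

Lemma is_series_fin (f : nat -> R) N : (forall k, (N < k)%nat -> f k = 0) -> is_series f (sum_n_m f 0 N).
Proof.
  intros H. apply is_series_lim. apply is_lim_seq_ext_loc with (fun _ => sum_n_m f 0 N).
  - exists N. intros n Hn. rewrite (s_Chasles f 0 N n) by lia.
    rewrite (s_zero f (S N) n). Rring. intros; apply H; lia.
  - apply is_lim_seq_const.
Qed.

Lemma is_series_sc (c : R) (a : nat -> R) l : is_series a l -> is_series (fun n => c * a n) (c * l).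
Proof. intro H. apply (is_series_scal_l c a l H). Qed.

Lemma is_series_pl (a b : nat -> R) la lb : is_series a la -> is_series b lb -> is_series (fun n => a n + b n) (la + lb).
Proof. intros H1 H2. apply (is_series_plus a b la lb H1 H2). Qed.

Lemma is_series_mi (a b : nat -> R) la lb : is_series a la -> is_series b lb -> is_series (fun n => a n - b n) (la - lb).
Proof. intros H1 H2. apply (is_series_minus a b la lb H1 H2). Qed.

Lemma is_series_fsum (F : nat -> nat -> R) (l : nat -> R) p q :
  (forall i, (p <= i <= q)%nat -> is_series (F i) (l i)) ->
  is_series (fun k => sum_n_m (fun i => F i k) p q) (sum_n_m l p q).
Proof.
  induction q; intros H.
  - destruct p.
    + rewrite s0. apply (is_series_ext (F 0%nat)). intro; rewrite s0; reflexivity. apply H; lia.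
    + rewrite sum_n_m_zero by lia. apply (is_series_ext (fun _ => 0)).
      intro; rewrite sum_n_m_zero by lia; reflexivity.
      apply is_series_lim. apply (is_lim_seq_ext (fun _ => 0)). intro n. rewrite s_zero; auto.
      apply is_lim_seq_const.
  - destruct (le_lt_dec p (S q)).
    + rewrite sS by lia. apply (is_series_ext (fun k => (sum_n_m (fun i => F i k) p q) + (F (S q) k))).
      intro; rewrite sS by lia; reflexivity.
      apply is_series_pl. apply IHq. intros; apply H; lia. apply H; lia.
    + rewrite sum_n_m_zero by lia. apply (is_series_ext (fun _ => 0)).
      intro; rewrite sum_n_m_zero by lia; reflexivity.
      apply is_series_lim. apply (is_lim_seq_ext (fun _ => 0)). intro n. rewrite s_zero; auto.
      apply is_lim_seq_const.
Qed.

Lemma diag_rev (f : nat -> nat -> R) n : diag f n = diag (fun b a => f a b) n.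
Proof.
  unfold diag. rewrite s_rev. apply sext. intros k Hk. f_equal. lia.
Qed.

Lemma is_series_uniq (a : nat -> R) l1 l2 : is_series a l1 -> is_series a l2 -> l1 = l2.
Proof. intros H1 H2. apply is_series_unique in H1. apply is_series_unique in H2. congruence. Qed.

Definition od (a : nat) : R := INR (2*a+1).

Lemma od_ge a : INR (S a) <= od a.
Proof. unfold od. apply le_INR. lia. Qed.

Lemma od_pos a : 0 < od a.
Proof. pose proof (od_ge a). pose proof (INR_S_pos a). lra. Qed.

Lemma od_ge1 a : 1 <= od a.
Proof. unfold od. replace 1 with (INR 1) by reflexivity. apply le_INR. lia. Qed.

Lemma inv_pow_bound (x : R) n s : INR (S n) <= x -> (2 <= s)%nat -> 0 <= / x ^ s <= / INR (S n) ^ 2.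
Proof.
  intros Hx Hs. pose proof (INR_S_pos n). assert (1 <= INR (S n)) by (rewrite S_INR; pose proof (pos_INR n); lra).
  split.
  - left. apply Rinv_0_lt_compat. apply pow_lt. lra.
  - apply Rinv_le_contravar. apply pow_lt; lra.
    apply Rle_trans with (x^2). apply pow_incr. lra.
    apply Rle_pow. lra. auto.
Qed.

Lemma lam_ex s : (2 <= s)%nat -> ex_series (fun n => / od n ^ s).
Proof.
  intros Hs. apply (ex_cmp_sq _ 1). intro n. rewrite Rmult_1_l. apply inv_pow_bound; auto. apply od_ge.
Qed.

Lemma lam_is s : (2 <= s)%nat -> is_series (fun n => / od n ^ s) (Series (fun n => / INR (2*n+1) ^ s)).
Proof. intros Hs. apply Series_correct. apply lam_ex; auto. Qed.

Lemma geomG (x y : R) : 0 < x -> 0 < y -> x <> y -> forall K, (1 <= K)%nat ->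
  sum_n_m (fun i => / x^(K+1-i) * / y^i) 1 K = (/ x^K - / y^K) / (y - x).
Proof.
  intros Hx Hy Hxy K HK. induction HK.
  - rewrite s0. simpl. field. repeat split; lra.
  - rewrite sS by lia.
    rewrite (sext (fun i => / x ^ (S m + 1 - i) * / y ^ i) (fun i => / x * (/ x ^ (m + 1 - i) * / y ^ i))).
    2:{ intros k Hk. replace (S m + 1 - k)%nat with (S (m + 1 - k)) by lia. simpl. field; repeat split; try apply pow_nonzero; lra. }
    rewrite sum_scal_l. rewrite IHHK. replace (S m + 1 - S m)%nat with 1%nat by lia. simpl.
    field; repeat split; try apply pow_nonzero; lra.
Qed.

Lemma geom_mid (x y : R) K : 0 < x -> 0 < y -> x <> y -> (2 <= K)%nat ->
  sum_n_m (fun i => / x^(K+1-i) * / y^i) 2 (K-1) = / x^K * (/ (y - x) - / y) - / y^K * (/ (y - x) + / x).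
Proof.
  intros Hx Hy Hxy HK.
  pose proof (geomG x y Hx Hy Hxy K ltac:(lia)) as G.
  rewrite sum_Sn_m in G by lia. rewrite plusR in G.
  replace (K - 1)%nat with (Nat.pred K) by lia.
  destruct K as [|K']; [lia|]. simpl Nat.pred.
  rewrite sS in G by lia.
  replace (S K' + 1 - 1)%nat with (S K') in G by lia.
  replace (S K' + 1 - S K')%nat with 1%nat in G by lia.
  assert (x^(S K') <> 0) by (apply pow_nonzero; lra).
  assert (y^(S K') <> 0) by (apply pow_nonzero; lra).
  revert G. gens. intros G.
  assert (Hyx : y - x <> 0) by lra.
  apply Rmult_eq_reg_r with (y - x); auto.
  assert (E : x0 = (/ x ^ S K' - / y ^ S K') / (y - x) - / x ^ S K' * / y ^ 1 - / x ^ 1 * / y ^ S K') by lra.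
  rewrite E. field. repeat split; lra.
Qed.

Definition Ev (n : nat) : R := sum_n_m (fun e => / INR (2*e)) 1 n.
Definition Od (n : nat) : R := sum_n_m (fun b => / od b) 0 n.

Lemma Ev_S n : Ev (S n) = Ev n + / INR (2 * S n).
Proof. unfold Ev. rewrite sS by lia. reflexivity. Qed.

Lemma Od_S n : Od (S n) = Od n + / od (S n).
Proof. unfold Od. rewrite sS by lia. reflexivity. Qed.

Lemma Ev_nonneg n : 0 <= Ev n.
Proof. induction n. unfold Ev. rewrite sE by lia. apply Rle_refl.
  rewrite Ev_S. pose proof (INR_S_pos (2*n+1)). replace (2 * S n)%nat with (S (2*n+1)) by lia.
  pose proof (Rinv_0_lt_compat _ H). lra. Qed.

Lemma Ev_le n : Ev n <= INR n.
Proof. induction n. unfold Ev. rewrite sE by lia. simpl; lra.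
  rewrite Ev_S, S_INR. replace (2 * S n)%nat with (S (2*n+1)) by lia.
  assert (/ INR (S (2*n+1)) <= 1). { rewrite <- Rinv_1. apply Rinv_le_contravar. lra. rewrite S_INR. pose proof (pos_INR (2*n+1)). lra. }
  lra. Qed.

Lemma Od_le n : Od n <= INR (S n).
Proof. induction n. unfold Od. rewrite s0. simpl. unfold od. simpl. lra.
  rewrite Od_S. rewrite (S_INR (S n)). assert (/ od (S n) <= 1).
  { rewrite <- Rinv_1. apply Rinv_le_contravar. lra. apply od_ge1. } lra. Qed.

Lemma Od_ge_last n : / od n <= Od n.
Proof. destruct n. unfold Od. rewrite s0. lra. rewrite Od_S.
  assert (0 <= Od n). { unfold Od. apply s_nonneg. intro; left; apply Rinv_0_lt_compat, od_pos. } lra. Qed.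

Lemma EO_le n : Od n + Ev n <= od n.
Proof. pose proof (Od_le n). pose proof (Ev_le n). unfold od. rewrite plus_INR, mult_INR, S_INR in *. simpl. lra. Qed.

Lemma Ev_shift a : sum_n_m (fun b => / INR (2*a+2*b+2)) 0 a = Ev (2*a+1) - Ev a.
Proof.
  transitivity (sum_n_m (fun e => / INR (2*e)) (0 + (a+1)) (a + (a+1))).
  { rewrite <- s_shift. apply sext. intros; f_equal; f_equal; lia. }
  unfold Ev. rewrite (s_Chasles _ 1 a (2*a+1)) by lia.
  replace (0 + (a+1))%nat with (S a) by lia. replace (a + (a+1))%nat with (2*a+1)%nat by lia. Rring.
Qed.

Definition tP1 (a b : nat) : R :=
  if (a <? b)%nat then / INR (2*(b-a)) - / INR (2*a+2*b+2) else / od b - / INR (2*a+2*b+2).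

Lemma tP1_partial a c : sum_n_m (tP1 a) 0 (a + c) = Od a + Ev a + Ev c - Ev (2*a+c+1).
Proof.
  induction c.
  - replace (a+0)%nat with a by lia. unfold tP1.
    rewrite (sext _ (fun b => / od b - / INR (2*a+2*b+2))).
    2:{ intros k Hk. destruct (Nat.ltb_spec a k). lia. reflexivity. }
    rewrite (sext _ (fun b => / od b + (-1) * / INR (2*a+2*b+2))) by (intros; ring).
    rewrite sum_plus, sum_scal_l, Ev_shift. fold (Od a).
    replace (2*a+0+1)%nat with (2*a+1)%nat by lia. replace (Ev 0) with 0 by (unfold Ev; rewrite sE; auto). Rring.
  - replace (a + S c)%nat with (S (a + c)) by lia. rewrite sS by lia. rewrite IHc.
    unfold tP1. destruct (Nat.ltb_spec a (S (a+c))); [|lia].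
    replace (2*a+S c+1)%nat with (S (2*a+c+1)) by lia. rewrite Ev_S, Ev_S.
    replace (S (a+c) - a)%nat with (S c) by lia.
    replace (2 * S (2*a+c+1))%nat with (2*a+2*S(a+c)+2)%nat by lia. Rring.
Qed.

Lemma inv_lim_c (C : R) : is_lim_seq (fun n => C * / INR (S n)) 0.
Proof. pose proof (is_lim_seq_scal_l _ C _ inv_lim) as H. simpl in H. rewrite Rmult_0_r in H. exact H. Qed.

Lemma Ev_tail a : is_lim_seq (fun c => Ev (2*a+c+1) - Ev c) 0.
Proof.
  apply is_lim_seq_le_le with (fun _ => 0) (fun c => INR (2*a+1) * / INR (S c)).
  - intro c. unfold Ev. rewrite (s_Chasles _ 1 c (2*a+c+1)) by lia.
    assert (E : forall x y : R, x + y - x = y) by (intros; ring). rewrite E.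
    split. apply s_nonneg. intro k. destruct k. simpl. rewrite Rinv_0. lra.
      left. apply Rinv_0_lt_compat. replace (2 * S k)%nat with (S (2*k+1)) by lia. apply INR_S_pos.
    apply Rle_trans with (sum_n_m (fun _ => / INR (S c)) (S c) (2*a+c+1)).
    + apply s_le. intros k Hk. apply Rinv_le_contravar. apply INR_S_pos. apply le_INR. lia.
    + rewrite sum_n_m_const. replace (S (2*a+c+1) - S c)%nat with (2*a+1)%nat by lia. lra.
  - apply is_lim_seq_const.
  - apply inv_lim_c.
Qed.

Lemma rowP1 a : is_series (tP1 a) (Od a + Ev a).
Proof.
  apply is_series_lim. apply (is_lim_seq_incr_n _ a).
  apply (is_lim_seq_ext (fun c => Od a + Ev a - (Ev (2*a+c+1) - Ev c))).
  { intro c. replace (c + a)%nat with (a + c)%nat by lia. rewrite tP1_partial. ring. }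
  replace (Od a + Ev a) with (Od a + Ev a - 0) at 1 by ring.
  apply is_lim_seq_minus'. apply is_lim_seq_const. apply Ev_tail.
Qed.

Definition lam (s : nat) : R := Series (fun n => / INR (2*n+1) ^ s).

Definition prd (l j : nat) (a b : nat) : R := / od a ^ l * / od b ^ j.
Definition Ug (l j : nat) (a b : nat) : R := if (a <? b)%nat then / od a ^ l * / od b ^ j else 0.
Definition Deq (l j : nat) (a b : nat) : R := if (a =? b)%nat then / od a ^ l * / od b ^ j else 0.
Definition Ef (K : nat) (a b : nat) : R := / od a ^ K * (/ od b - / INR (2*a+2*b+2)).
Definition P1f (K : nat) (a b : nat) : R := / od a ^ K * tP1 a b.
Definition P2f (K : nat) (a b : nat) : R := if (a <? b)%nat then / od b ^ K * (/ INR (2*(b-a)) + / od a) else 0.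

Lemma inv_od_pow_pos a l : 0 < / od a ^ l.
Proof. apply Rinv_0_lt_compat, pow_lt, od_pos. Qed.

Lemma prod_nonneg l j a b : 0 <= prd l j a b.
Proof. unfold prd. pose proof (inv_od_pow_pos a l). pose proof (inv_od_pow_pos b j). nra. Qed.

Lemma lam_is' s : (2 <= s)%nat -> is_series (fun n => / od n ^ s) (lam s).
Proof. apply lam_is. Qed.

Lemma prod_is l j : (2 <= l)%nat -> (2 <= j)%nat -> is_series (diag (prd l j)) (lam l * lam j).
Proof.
  intros Hl Hj. apply (L1 _ (fun a => / od a ^ l * lam j)).
  - apply prod_nonneg.
  - intro a. unfold prd. apply is_series_sc. apply lam_is'; auto.
  - apply (is_series_ext (fun a => / od a ^ l * lam j)). reflexivity.
    apply is_series_scal_r. apply lam_is'; auto.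
Qed.

Lemma Ug_nonneg l j a b : 0 <= Ug l j a b.
Proof. unfold Ug. destruct (a <? b)%nat. apply prod_nonneg. lra. Qed.

Lemma Ug_le l j a b : Ug l j a b <= prd l j a b.
Proof. unfold Ug. destruct (a <? b)%nat. unfold prd; lra. apply prod_nonneg. Qed.

Lemma diag_nonneg f n : (forall a b, 0 <= f a b) -> 0 <= diag f n.
Proof. intros H. unfold diag. apply s_nonneg. intro; apply H. Qed.

Lemma diag_le f g n : (forall a b, f a b <= g a b) -> diag f n <= diag g n.
Proof. intros H. unfold diag. apply s_le. intros; apply H. Qed.

Definition Uv (l j : nat) : R := Series (diag (Ug l j)).

Lemma Uv_is l j : (2 <= l)%nat -> (2 <= j)%nat -> is_series (diag (Ug l j)) (Uv l j).
Proof.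
  intros Hl Hj. apply Series_correct. apply (ex_cmp _ (diag (prd l j))).
  - intro n. split. apply diag_nonneg, Ug_nonneg. apply diag_le, Ug_le.
  - exists (lam l * lam j). apply prod_is; auto.
Qed.

Lemma Deq_row l j a : is_series (Deq l j a) (/ od a ^ (l + j)).
Proof.
  replace (/ od a ^ (l + j)) with (sum_n_m (Deq l j a) 0 a).
  - apply is_series_fin. intros k Hk. unfold Deq. destruct (Nat.eqb_spec a k). lia. reflexivity.
  - destruct a.
    + rewrite s0. unfold Deq. simpl. rewrite pow_add, Rinv_mult. reflexivity.
    + rewrite sS by lia. rewrite s_zero. unfold Deq. rewrite Nat.eqb_refl. rewrite pow_add, Rinv_mult. Rring.
      intros k Hk. unfold Deq. destruct (Nat.eqb_spec (S a) k). lia. reflexivity.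
Qed.

Lemma Deq_is l j : (1 <= l + j)%nat -> (2 <= l + j)%nat -> is_series (diag (Deq l j)) (lam (l + j)).
Proof.
  intros _ H. apply (L1 _ (fun a => / od a ^ (l + j))).
  - intros a b. unfold Deq. destruct (a =? b)%nat. apply prod_nonneg. lra.
  - apply Deq_row.
  - apply lam_is'; auto.
Qed.

Lemma U_pair l j : (2 <= l)%nat -> (2 <= j)%nat -> Uv l j + Uv j l = lam l * lam j - lam (l + j).
Proof.
  intros Hl Hj.
  assert (H : is_series (fun n => diag (Ug l j) n + diag (Ug j l) n + diag (Deq l j) n) (Uv l j + Uv j l + lam (l + j))).
  { apply is_series_pl. apply is_series_pl. apply Uv_is; auto. apply Uv_is; auto. apply Deq_is; lia. }
  assert (H2 : is_series (fun n => diag (Ug l j) n + diag (Ug j l) n + diag (Deq l j) n) (lam l * lam j)).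
  { apply (is_series_ext (diag (prd l j))); [|apply prod_is; auto].
    intro n. rewrite (diag_rev (Ug j l)). unfold diag. rewrite <- !sum_plus. apply sext. intros a Ha.
    unfold prd, Ug, Deq. set (b := (n - a)%nat).
    destruct (Nat.ltb_spec a b); destruct (Nat.ltb_spec b a); destruct (Nat.eqb_spec a b); try lia.
    - Rring.
    - Rring.
    - subst b. rewrite e. Rring. }
  pose proof (is_series_uniq _ _ _ H H2). lra.
Qed.

Lemma od_diff a b : (a < b)%nat -> od b - od a = INR (2*(b-a)).
Proof. intros H. unfold od. assert (E : (2*b+1 = 2*(b-a) + (2*a+1))%nat) by lia. rewrite E, plus_INR. ring. Qed.

Lemma pointwise K a b : (2 <= K)%nat ->
  Ef K a b + sum_n_m (fun i => Ug (K+1-i) i a b) 2 (K-1) = P1f K a b - P2f K a b.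
Proof.
  intros HK. unfold Ef, P1f, P2f, tP1.
  destruct (Nat.ltb_spec a b).
  - rewrite (sext _ (fun i => / od a ^ (K+1-i) * / od b ^ i)).
    2:{ intros k Hk. unfold Ug. destruct (Nat.ltb_spec a b); [reflexivity|lia]. }
    rewrite geom_mid; try apply od_pos; auto.
    2:{ pose proof (od_diff a b H). pose proof (pos_INR (2*(b-a))). assert (INR (2*(b-a)) <> 0).
        { apply not_0_INR. lia. } lra. }
    rewrite od_diff by auto. unfold od at 2 4. replace (2*a+2*b+2)%nat with (2*a+2*b+2)%nat by reflexivity.
    Rring.
  - rewrite s_zero. Rring. intros k Hk. unfold Ug. destruct (Nat.ltb_spec a b); [lia|reflexivity].
Qed.

Lemma tP1_nonneg a b : 0 <= tP1 a b.
Proof.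
  unfold tP1. destruct (Nat.ltb_spec a b).
  - assert (INR (2*(b-a)) <= INR (2*a+2*b+2)) by (apply le_INR; lia).
    assert (0 < INR (2*(b-a))) by (apply lt_0_INR; lia).
    pose proof (Rinv_le_contravar _ _ H1 H0). lra.
  - assert (od b <= INR (2*a+2*b+2)) by (unfold od; apply le_INR; lia).
    pose proof (Rinv_le_contravar _ _ (od_pos b) H0). lra.
Qed.

Lemma P1f_nonneg K a b : 0 <= P1f K a b.
Proof. unfold P1f. pose proof (inv_od_pow_pos a K). pose proof (tP1_nonneg a b). nra. Qed.

Lemma P2f_nonneg K a b : 0 <= P2f K a b.
Proof.
  unfold P2f. destruct (Nat.ltb_spec a b); [|lra].
  pose proof (inv_od_pow_pos b K). assert (0 < INR (2*(b-a))) by (apply lt_0_INR; lia).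
  pose proof (Rinv_0_lt_compat _ H1). pose proof (Rinv_0_lt_compat _ (od_pos a)). nra.
Qed.

Lemma inv_pow_od_mul a K : (1 <= K)%nat -> / od a ^ K * od a = / od a ^ (K - 1).
Proof.
  intros HK. rewrite (pow_split (od a) 1 K) by lia. simpl. rewrite Rmult_1_r.
  pose proof (od_pos a). assert (od a ^ (K-1) <> 0) by (apply pow_nonzero; lra). field. lra.
Qed.

Lemma ex_row_bound (h : nat -> R) K : (3 <= K)%nat -> (forall a, 0 <= h a <= od a) ->
  ex_series (fun a => / od a ^ K * h a).
Proof.
  intros HK H. apply (ex_cmp_sq _ 1). intro a. rewrite Rmult_1_l.
  pose proof (inv_od_pow_pos a K). specialize (H a). split. nra.
  apply Rle_trans with (/ od a ^ K * od a). nra.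
  rewrite inv_pow_od_mul by lia. apply inv_pow_bound. apply od_ge. lia.
Qed.

Lemma rowP2 K b : is_series (fun a => P2f K a b) (/ od b ^ K * (Od b + Ev b - / od b)).
Proof.
  replace (/ od b ^ K * (Od b + Ev b - / od b)) with (sum_n_m (fun a => P2f K a b) 0 b).
  - apply is_series_fin. intros k Hk. unfold P2f. destruct (Nat.ltb_spec k b). lia. reflexivity.
  - destruct b.
    + rewrite s0. unfold P2f. simpl. unfold Od, Ev. rewrite s0, sE by lia. Rring.
    + rewrite sS by lia. unfold P2f at 2. rewrite Nat.ltb_irrefl.
      rewrite (sext _ (fun a => / od (S b) ^ K * (/ INR (2 * (S b - a)) + / od a))).
      2:{ intros k Hk. unfold P2f. destruct (Nat.ltb_spec k (S b)); [reflexivity|lia]. }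
      rewrite sum_scal_l, sum_plus. rewrite Od_S.
      rewrite s_rev. rewrite (sext _ (fun i => / INR (2 * S i))) by (intros; f_equal; f_equal; lia).
      unfold Ev. rewrite <- (s_shift1 (fun e => / INR (2*e)) 0 b). fold (Od b). Rring.
Qed.

Lemma rowP1K K a : is_series (P1f K a) (/ od a ^ K * (Od a + Ev a)).
Proof. apply is_series_sc. apply rowP1. Qed.

Lemma stepB1 K : (3 <= K)%nat ->
  is_series (fun n => diag (P1f K) n - diag (P2f K) n) (lam (K + 1)).
Proof.
  intros HK.
  set (r1 := fun a => / od a ^ K * (Od a + Ev a)).
  set (r2 := fun b => / od b ^ K * (Od b + Ev b - / od b)).
  assert (E1 : ex_series r1).
  { apply ex_row_bound; auto. intro a. split. pose proof (Ev_nonneg a). pose proof (Od_ge_last a).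
    pose proof (Rinv_0_lt_compat _ (od_pos a)). lra. apply EO_le. }
  assert (E2 : ex_series r2).
  { apply ex_row_bound; auto. intro a. split. pose proof (Ev_nonneg a). pose proof (Od_ge_last a). lra.
    pose proof (EO_le a). pose proof (Rinv_0_lt_compat _ (od_pos a)). lra. }
  assert (H1 : is_series (diag (P1f K)) (Series r1)).
  { apply (L1 _ r1). apply P1f_nonneg. intro a; apply rowP1K. apply Series_correct; auto. }
  assert (H2 : is_series (diag (P2f K)) (Series r2)).
  { apply (is_series_ext (diag (fun b a => P2f K a b))). intro n. rewrite diag_rev. reflexivity.
    apply (L1 _ r2). intros; apply P2f_nonneg. intro b. apply rowP2. apply Series_correct; auto. }
  pose proof (is_series_mi _ _ _ _ H1 H2) as H.
  replace (lam (K+1)) with (Series r1 - Series r2); auto.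
  apply (is_series_uniq (fun a => r1 a - r2 a)).
  - apply is_series_mi; apply Series_correct; auto.
  - apply (is_series_ext (fun a => / od a ^ (K+1))). intro a. unfold r1, r2.
    rewrite pow_add. pose proof (od_pos a). assert (od a ^ K <> 0) by (apply pow_nonzero; lra).
    simpl. field. lra.
    apply lam_is'. lia.
Qed.

Lemma stepB2 K : (3 <= K)%nat ->
  is_series (diag (Ef K)) (lam (K + 1) - sum_n_m (fun i => Uv (K+1-i) i) 2 (K-1)).
Proof.
  intros HK.
  assert (HU : is_series (fun n => sum_n_m (fun i => diag (Ug (K+1-i) i) n) 2 (K-1))
                         (sum_n_m (fun i => Uv (K+1-i) i) 2 (K-1))).
  { apply (is_series_fsum (fun i => diag (Ug (K+1-i) i))). intros i Hi. apply Uv_is; lia. }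
  pose proof (is_series_mi _ _ _ _ (stepB1 K HK) HU) as H.
  refine (is_series_ext _ _ _ _ H). intro n. simpl.
  assert (Hs : sum_n_m (fun i => diag (Ug (K+1-i) i) n) 2 (K-1) = sum_n_m (fun a => sum_n_m (fun i => Ug (K+1-i) i a (n-a)%nat) 2 (K-1)) 0 n).
  { unfold diag. apply (s_switch (fun i a => Ug (K+1-i) i a (n-a)%nat)). }
  assert (Hp : diag (P1f K) n - diag (P2f K) n = sum_n_m (fun a => Ef K a (n-a)%nat + sum_n_m (fun i => Ug (K+1-i) i a (n-a)%nat) 2 (K-1)) 0 n).
  { unfold diag. rewrite (sext (fun a => Ef K a (n-a)%nat + sum_n_m (fun i => Ug (K+1-i) i a (n-a)%nat) 2 (K-1)) (fun a => P1f K a (n-a)%nat + (-1) * P2f K a (n-a)%nat)).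
    rewrite sum_plus, sum_scal_l. Rring.
    intros a Ha. rewrite pointwise by lia. ring. }
  rewrite Hs, Hp. rewrite sum_plus. unfold diag. Rring.
Qed.

Lemma pair_sum (f : nat -> R) k : (1 <= k)%nat ->
  sum_n_m f 2 (2*k-1) = sum_n_m (fun j => f (2*j)%nat + f (2*j+1)%nat) 1 (k-1).
Proof.
  intros Hk. induction Hk.
  - rewrite !sE by lia. reflexivity.
  - replace (2 * S m - 1)%nat with (S (S (2*m-1))) by lia.
    rewrite sS by lia. rewrite sS by lia. rewrite IHHk.
    replace (S m - 1)%nat with (S (m-1)) by lia. rewrite (sS _ 1 (m-1)) by lia.
    replace (S (m-1)) with m by lia. replace (S (2*m-1)) with (2*m)%nat by lia.
    replace (S (2*m)) with (2*m+1)%nat by lia. Rring.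
Qed.

Lemma rev_1 (g : nat -> R) k : sum_n_m g 1 (k-1) = sum_n_m (fun j => g (k - j)%nat) 1 (k-1).
Proof.
  destruct k as [|[|m]].
  - rewrite !sE by lia. reflexivity.
  - rewrite !sE by lia. reflexivity.
  - replace (S (S m) - 1)%nat with (S m) by lia.
    rewrite <- !s_shift1. rewrite s_rev. apply sext. intros i Hi. f_equal. lia.
Qed.

Lemma stepB3 k : (2 <= k)%nat ->
  sum_n_m (fun i => Uv (2*k+1-i) i) 2 (2*k-1) =
  sum_n_m (fun j => lam (2*j) * lam (2*k+1-2*j)) 1 (k-1) - INR (k-1) * lam (2*k+1).
Proof.
  intros Hk. rewrite pair_sum by lia. rewrite sum_plus.
  rewrite (rev_1 (fun j => Uv (2*k+1-(2*j+1)) (2*j+1))).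
  rewrite <- sum_plus.
  rewrite (sext _ (fun j => lam (2*j) * lam (2*k+1-2*j) + (-1) * lam (2*k+1))).
  - rewrite sum_plus, sum_scal_l, sum_n_m_const. replace (S (k-1) - 1)%nat with (k-1)%nat by lia. Rring.
  - intros j Hj.
    replace (2*k+1-(2*(k-j)+1))%nat with (2*j)%nat by lia.
    replace (2*(k-j)+1)%nat with (2*k+1-2*j)%nat by lia.
    rewrite U_pair by lia. replace (2*k+1-2*j + 2*j)%nat with (2*k+1)%nat by lia. ring.
Qed.

Definition Dv (K : nat) : R := Series (diag (Ef K)).

Lemma stepB k : (2 <= k)%nat ->
  is_series (diag (Ef (2*k))) (INR k * lam (2*k+1) - sum_n_m (fun j => lam (2*j) * lam (2*k+1-2*j)) 1 (k-1)).
Proof.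
  intros Hk. pose proof (stepB2 (2*k) ltac:(lia)) as H.
  replace (2*k+1)%nat with (2*k+1)%nat in H by reflexivity.
  rewrite stepB3 in H by lia.
  replace (INR k * lam (2*k+1) - sum_n_m (fun j => lam (2*j) * lam (2*k+1-2*j)) 1 (k-1))
    with (lam (2*k+1) - (sum_n_m (fun j => lam (2*j) * lam (2*k+1-2*j)) 1 (k-1) - INR (k-1) * lam (2*k+1))).
  exact H.
  rewrite minus_INR by lia. simpl. Rring.
Qed.

Definition phi (s t : nat) (a b : nat) : R := / (INR (2*a+2*b+2) ^ s * od a ^ t).

Lemma neg1_even r : (-1)^(2*r) = 1.
Proof. rewrite pow_mult. replace ((-1)^2) with 1 by ring. apply pow1. Qed.

Lemma neg1_sq j : (-1)^j * (-1)^j = 1.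
Proof. rewrite <- pow_add. replace (j+j)%nat with (2*j)%nat by lia. apply neg1_even. Qed.

Lemma neg1_sub r j : (j <= 2*r)%nat -> (-1)^(2*r-j) = (-1)^j.
Proof.
  intros H. assert (E : (-1)^(2*r) = (-1)^(2*r-j) * (-1)^j) by (rewrite <- pow_add; f_equal; lia).
  rewrite neg1_even in E. pose proof (neg1_sq j).
  transitivity ((-1)^(2*r-j) * ((-1)^j * (-1)^j)). rewrite H0; ring.
  rewrite <- Rmult_assoc, <- E. ring.
Qed.

Lemma inv_negpow (y X : R) e : y <> 0 -> X <> 0 -> / ((- y)^e * X) = (-1)^e * / (y^e * X).
Proof.
  intros Hy HX. replace (- y) with ((-1) * y) by ring. rewrite Rpow_mult_distr.
  pose proof (neg1_sq e). assert ((-1)^e <> 0) by (intro Z; rewrite Z in H; lra).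
  assert (y^e <> 0) by (apply pow_nonzero; auto).
  apply Rmult_eq_reg_l with ((-1)^e * y^e * X). 2:{ repeat apply Rmult_integral_contrapositive; auto. }
  replace ((-1) ^ e * y ^ e * X * / ((-1) ^ e * y ^ e * X)) with 1 by (field; auto).
  replace ((-1) ^ e * y ^ e * X * ((-1) ^ e * / (y ^ e * X))) with ((-1)^e * (-1)^e) by (field; auto).
  lra.
Qed.

Lemma N_eq a b : INR (2*a+2*b+2) = od a + od b.
Proof. unfold od. rewrite <- plus_INR. f_equal. lia. Qed.

Lemma N_pos a b : 0 < INR (2*a+2*b+2).
Proof. rewrite N_eq. pose proof (od_pos a); pose proof (od_pos b). lra. Qed.

Lemma pwA v r a b : (1 <= v)%nat -> (1 <= r)%nat ->
  / (INR (2*a+2*b+2) ^ (2*v+1) * od b ^ (2*r)) - / (INR (2*a+2*b+2) ^ (2*v+1) * od a ^ (2*r))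
  = sum_n_m (fun i => Binomial.C (2*r+i-1) i * phi (2*v+1-i) (2*r+i) a b) 1 (2*v-1)
  + sum_n_m (fun j => (-1)^j * Binomial.C (2*v+j) j * prd (2*v+1+j) (2*r-j) a b) 0 (2*r-2)
  - Binomial.C (2*v+2*r-1) (2*v) * Ef (2*v+2*r) a b.
Proof.
  intros Hv Hr.
  set (N := INR (2*a+2*b+2)). set (m := od a). set (m' := od b).
  assert (HN : N = m + m') by apply N_eq.
  assert (Hm : 0 < m) by apply od_pos. assert (Hm' : 0 < m') by apply od_pos.
  assert (HNp : 0 < N) by lra.
  pose proof (pf_frac N (- m') (2*v) (2*r-1) ltac:(lra) ltac:(lra) ltac:(lra)) as H.
  replace (N + - m') with m in H by lra.
  replace (S (2*r-1)) with (2*r)%nat in H by lia.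
  replace (S (2*v)) with (2*v+1)%nat in H by lia.
  replace ((- m')^(2*r)) with (m'^(2*r)) in H.
  2:{ replace (- m') with ((-1) * m') by ring. rewrite Rpow_mult_distr, neg1_even. ring. }
  rewrite sum_Sn_m in H by lia. try rewrite plusR in H.
  replace (2*v)%nat with (S (2*v-1)) in H at 3 by lia.
  rewrite sS in H by lia. replace (S (2*v-1)) with (2*v)%nat in H by lia.
  replace (2*r-1)%nat with (S (2*r-2)) in H at 3 by lia.
  rewrite (sS _ 0 (2*r-2)) in H by lia. replace (S (2*r-2)) with (2*r-1)%nat in H by lia.
  rewrite (sext (fun i => Binomial.C (2*r-1+i) i * / (N ^ (2*v+1-i) * m ^ (2*r+i)))
                (fun i => Binomial.C (2*r+i-1) i * phi (2*v+1-i) (2*r+i) a b)) in H.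
  2:{ intros k Hk. unfold phi. fold N m. f_equal. f_equal. lia. }
  rewrite (sext (fun j => Binomial.C (2*v+j) j * / ((- m') ^ (2*r-j) * m ^ (2*v+1+j)))
                (fun j => (-1)^j * Binomial.C (2*v+j) j * prd (2*v+1+j) (2*r-j) a b)) in H.
  2:{ intros k Hk. rewrite inv_negpow by (try apply pow_nonzero; lra). rewrite neg1_sub by lia.
      unfold prd. fold m m'. rewrite Rinv_mult. ring. }
  revert H. gens. intros H.
  rewrite H.
  unfold Ef. fold m m'. replace (INR (2*a+2*b+2)) with N by reflexivity.
  replace (2*v+1-0)%nat with (2*v+1)%nat by lia. replace (2*r+0)%nat with (2*r)%nat by lia.
  replace (2*v+1-2*v)%nat with 1%nat by lia. replace (2*r+2*v)%nat with (2*v+2*r)%nat by lia.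
  replace (2*r-(2*r-1))%nat with 1%nat by lia. replace (2*v+1+(2*r-1))%nat with (2*v+2*r)%nat by lia.
  replace (2*r-1+2*v)%nat with (2*v+2*r-1)%nat by lia.
  replace (2*v+(2*r-1))%nat with (2*v+2*r-1)%nat by lia.
  replace (2*r-1+0)%nat with (2*r-1)%nat by lia.
  rewrite C_n_0.
  rewrite (pascal_step1 (2*v+2*r-1) (2*r-1)) by lia. replace (2*v+2*r-1-(2*r-1))%nat with (2*v)%nat by lia.
  rewrite inv_negpow by (try apply pow_nonzero; lra).
  assert (m ^ (2*v+2*r) <> 0) by (apply pow_nonzero; lra).
  match goal with |- context [plus ?x ?y] => replace (plus x y) with (x+y) by reflexivity end. rewrite !pow_1. field. repeat split; try apply pow_nonzero; lra.
Qed.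

Definition SoddL (n t : nat) : R := sum_n_m (fun k : nat => / (INR (2 * k - 1)) ^ t) 1 n.
Definition sigmaL (s t : nat) : R := Series (fun n : nat => SoddL (S n) t / (INR (S n)) ^ s).

Lemma SoddL_eq n t : SoddL (S n) t = sum_n_m (fun a => / od a ^ t) 0 n.
Proof. unfold SoddL. rewrite <- s_shift1. apply sext. intros k _. unfold od. f_equal. f_equal. f_equal. lia. Qed.

Definition Z2 : R := Series (fun n => / INR (S n) ^ 2).

Lemma SoddL_bound n t : (2 <= t)%nat -> 0 <= SoddL (S n) t <= Z2.
Proof.
  intros Ht. rewrite SoddL_eq. split.
  - apply s_nonneg. intro; left; apply inv_od_pow_pos.
  - apply Rle_trans with (sum_n_m (fun a => / INR (S a) ^ 2) 0 n).
    + apply s_le. intros k _. apply inv_pow_bound; auto. apply od_ge.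
    + apply series_partial_le. intro k. left. apply Rinv_0_lt_compat, pow_lt, INR_S_pos.
      apply Series_correct, inv_sq_ex.
Qed.

Lemma sigma_is s t : (2 <= s)%nat -> (2 <= t)%nat ->
  is_series (fun n => SoddL (S n) t / INR (S n) ^ s) (sigmaL s t).
Proof.
  intros Hs Ht. apply Series_correct. apply (ex_cmp_sq _ Z2). intro n.
  pose proof (SoddL_bound n t Ht). pose proof (inv_pow_bound (INR (S n)) n s (Rle_refl _) Hs).
  unfold Rdiv. split; nra.
Qed.

Lemma diag_phi s t n : diag (phi s t) n = / 2 ^ s * (SoddL (S n) t / INR (S n) ^ s).
Proof.
  unfold diag, phi. rewrite (sext _ (fun a => / INR (2*n+2) ^ s * / od a ^ t)).
  2:{ intros k Hk. rewrite Rinv_mult. f_equal. f_equal. f_equal. f_equal. lia. }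
  rewrite sum_scal_l, <- SoddL_eq.
  replace (INR (2*n+2)) with (2 * INR (S n)) by (rewrite S_INR, plus_INR, mult_INR; simpl; ring).
  rewrite Rpow_mult_distr. pose proof (INR_S_pos n).
  assert (2^s <> 0) by (apply pow_nonzero; lra). assert (INR (S n)^s <> 0) by (apply pow_nonzero; lra).
  unfold Rdiv. rewrite Rinv_mult. Rring.
Qed.

Lemma phi_is s t : (2 <= s)%nat -> (2 <= t)%nat -> is_series (diag (phi s t)) (/ 2 ^ s * sigmaL s t).
Proof.
  intros Hs Ht. apply (is_series_ext (fun n => / 2 ^ s * (SoddL (S n) t / INR (S n) ^ s))).
  intro n; rewrite diag_phi; reflexivity.
  apply is_series_sc. apply sigma_is; auto.
Qed.

Lemma diag_lin (F : nat -> nat -> nat -> R) (c : nat -> R) p q n :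
  diag (fun a b => sum_n_m (fun i => c i * F i a b) p q) n = sum_n_m (fun i => c i * diag (F i) n) p q.
Proof.
  unfold diag. rewrite <- s_switch. apply sext. intros i _. rewrite sum_scal_l. reflexivity.
Qed.

Lemma diag_ext (f g : nat -> nat -> R) n : (forall a b, f a b = g a b) -> diag f n = diag g n.
Proof. intros H. unfold diag. apply sext. intros; apply H. Qed.

Lemma diag_minus (f g : nat -> nat -> R) n : diag (fun a b => f a b - g a b) n = diag f n - diag g n.
Proof.
  unfold diag. rewrite (sext _ (fun a => f a (n-a)%nat + (-1) * g a (n-a)%nat)) by (intros; ring).
  rewrite sum_plus, sum_scal_l. Rring.
Qed.

Lemma diag_plus (f g : nat -> nat -> R) n : diag (fun a b => f a b + g a b) n = diag f n + diag g n.
Proof. unfold diag. rewrite sum_plus. reflexivity. Qed.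

Lemma diag_scal (f : nat -> nat -> R) c n : diag (fun a b => c * f a b) n = c * diag f n.
Proof. unfold diag. rewrite sum_scal_l. reflexivity. Qed.

Lemma lhs_zero v r n :
  diag (fun a b => / (INR (2*a+2*b+2) ^ (2*v+1) * od b ^ (2*r)) - / (INR (2*a+2*b+2) ^ (2*v+1) * od a ^ (2*r))) n = 0.
Proof.
  rewrite diag_minus. rewrite (diag_rev (fun a b => / (INR (2*a+2*b+2) ^ (2*v+1) * od b ^ (2*r)))).
  unfold diag. rewrite (sext (fun a => / (INR (2*(n-a)+2*a+2) ^ (2*v+1) * od a ^ (2*r)))
     (fun a => / (INR (2*a+2*(n-a)+2) ^ (2*v+1) * od a ^ (2*r)))).
  Rring. intros; do 4 f_equal; lia.
Qed.

Lemma stepA v r : (1 <= v)%nat -> (1 <= r)%nat ->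
  sum_n_m (fun i => Binomial.C (2*r+i-1) i * (/ 2 ^ (2*v+1-i) * sigmaL (2*v+1-i) (2*r+i))) 1 (2*v-1)
  + sum_n_m (fun j => (-1)^j * Binomial.C (2*v+j) j * (lam (2*v+1+j) * lam (2*r-j))) 0 (2*r-2)
  - Binomial.C (2*v+2*r-1) (2*v) * (INR (v+r) * lam (2*(v+r)+1) - sum_n_m (fun j => lam (2*j) * lam (2*(v+r)+1-2*j)) 1 (v+r-1))
  = 0.
Proof.
  intros Hv Hr.
  set (Cc := Binomial.C (2*v+2*r-1) (2*v)).
  assert (H1 : is_series (fun n => sum_n_m (fun i => Binomial.C (2*r+i-1) i * diag (phi (2*v+1-i) (2*r+i)) n) 1 (2*v-1))
     (sum_n_m (fun i => Binomial.C (2*r+i-1) i * (/ 2 ^ (2*v+1-i) * sigmaL (2*v+1-i) (2*r+i))) 1 (2*v-1))).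
  { apply (is_series_fsum (fun i n => Binomial.C (2*r+i-1) i * diag (phi (2*v+1-i) (2*r+i)) n)).
    intros i Hi. apply is_series_sc. apply phi_is; lia. }
  assert (H2 : is_series (fun n => sum_n_m (fun j => (-1)^j * Binomial.C (2*v+j) j * diag (prd (2*v+1+j) (2*r-j)) n) 0 (2*r-2))
     (sum_n_m (fun j => (-1)^j * Binomial.C (2*v+j) j * (lam (2*v+1+j) * lam (2*r-j))) 0 (2*r-2))).
  { apply (is_series_fsum (fun j n => (-1)^j * Binomial.C (2*v+j) j * diag (prd (2*v+1+j) (2*r-j)) n)).
    intros j Hj. apply is_series_sc. apply prod_is; lia. }
  assert (H3 : is_series (fun n => Cc * diag (Ef (2*v+2*r)) n)
     (Cc * (INR (v+r) * lam (2*(v+r)+1) - sum_n_m (fun j => lam (2*j) * lam (2*(v+r)+1-2*j)) 1 (v+r-1)))).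
  { apply is_series_sc. replace (2*v+2*r)%nat with (2*(v+r))%nat by lia. apply stepB. lia. }
  pose proof (is_series_mi _ _ _ _ (is_series_pl _ _ _ _ H1 H2) H3) as H.
  apply (is_series_uniq _ _ _ H).
  apply (is_series_ext (fun _ => 0)).
  2:{ apply is_series_lim. apply (is_lim_seq_ext (fun _ => 0)). intro n. rewrite s_zero; auto. apply is_lim_seq_const. }
  intro n. rewrite <- (lhs_zero v r n).
  rewrite (diag_ext _ (fun a b => sum_n_m (fun i => Binomial.C (2*r+i-1) i * phi (2*v+1-i) (2*r+i) a b) 1 (2*v-1)
      + sum_n_m (fun j => ((-1)^j * Binomial.C (2*v+j) j) * prd (2*v+1+j) (2*r-j) a b) 0 (2*r-2)
      - Cc * Ef (2*v+2*r) a b)).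
  2:{ intros a b. rewrite pwA by auto. reflexivity. }
  rewrite diag_minus, diag_plus, diag_scal.
  rewrite (diag_lin (fun i => phi (2*v+1-i) (2*r+i)) (fun i => Binomial.C (2*r+i-1) i)).
  rewrite (diag_lin (fun j => prd (2*v+1+j) (2*r-j)) (fun j => (-1)^j * Binomial.C (2*v+j) j)).
  reflexivity.
Qed.

Theorem mainTheorem13 (v r : nat) (hv : (1 <= v)%nat) (hr : (1 <= r)%nat) :
  sum_n_m (fun i : nat =>
      2 ^ (i - 1)%nat * binom (2 * r + i - 1)%nat i
        * sigma_st (2 * v + 1 - i)%nat (2 * r + i)%nat)
    1 (2 * v - 1)%nat
  + 2 ^ (2 * v)%nat * sum_n_m (fun j : nat =>
      (-1) ^ j * binom (2 * v + j)%nat j * lambda_odd (2 * v + 1 + j)%nat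
        * lambda_odd (2 * r - j)%nat)
    0 (2 * r - 2)%nat
  - 2 ^ (2 * v)%nat * binom (2 * v + 2 * r - 1)%nat (2 * v)%nat * INR (v + r)
      * lambda_odd (2 * v + 2 * r + 1)%nat
  + 2 ^ (2 * v)%nat * binom (2 * v + 2 * r - 1)%nat (2 * v)%nat
      * sum_n_m (fun j : nat =>
          lambda_odd (2 * j)%nat * lambda_odd (2 * r + 2 * v - 2 * j + 1)%nat)
          1 (r + v - 1)%nat
  = 0.
Proof.
  pose proof (stepA v r hv hr) as H.
  change sigma_st with sigmaL. change lambda_odd with lam. unfold binom.
  rewrite (sext (fun i => 2 ^ (i - 1) * Binomial.C (2 * r + i - 1) i * sigmaL (2 * v + 1 - i) (2 * r + i))
     (fun i => 2 ^ (2*v) * (Binomial.C (2*r+i-1) i * (/ 2 ^ (2*v+1-i) * sigmaL (2*v+1-i) (2*r+i))))).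
  2:{ intros i Hi. assert (E : 2^(2*v) = 2^(i-1) * 2^(2*v+1-i)) by (rewrite <- pow_add; f_equal; lia).
      rewrite E. assert (2^(2*v+1-i) <> 0) by (apply pow_nonzero; lra). field. auto. }
  rewrite sum_scal_l.
  rewrite (sext (fun j => (-1) ^ j * Binomial.C (2 * v + j) j * lam (2 * v + 1 + j) * lam (2 * r - j))
     (fun j => (-1)^j * Binomial.C (2*v+j) j * (lam (2*v+1+j) * lam (2*r-j)))) by (intros; ring).
  rewrite (sext (fun j => lam (2 * j) * lam (2 * r + 2 * v - 2 * j + 1))
     (fun j => lam (2*j) * lam (2*(v+r)+1-2*j))) by (intros; do 2 f_equal; lia).
  replace (r + v - 1)%nat with (v + r - 1)%nat by lia.
  replace (2 * v + 2 * r + 1)%nat with (2*(v+r)+1)%nat by lia.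
  revert H. gens. intros H.
  replace 0 with (2^(2*v) * 0) by ring. rewrite <- H. ring.
Qed.
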